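(* Let $I$ be an index set of non-measurable cardinality and $H$ the group $\mathbb Z^{(I)}$ with the topology of pointwise convergence on $\mathbb Z^I$. Let $\bar t\in\mathbb T^I$ be such that $\bar t(i)=\frac{p_i}{q_i}t_0$ (modulo $1$) for all $i\in I$, where $p_i,q_i$ are relatively prime integers for each $i$, and $t_0$ is either an irrational number or $1$. Then $\bar t\in\widehat H$ if and only if the family $(|q_i|)_{i\in I}$ is bounded.
   Context: $\mathbb Z^{(I)}$ is the group of finitely supported functions $I\to\mathbb Z$, paired with $\mathbb Z^I$ by $\langle\bar g,\bar x\rangle=\sum_i\bar g(i)\bar x(i)$; $H$ carries the weakest topology making all maps $\bar g\mapsto\langle\bar g,\bar x\rangle\in\mathbb Z$ ($\mathbb Z$ discrete) continuous. $\mathbb T=\mathbb R/\mathbb Z$, identified with $(-1/2,1/2]$. An element $\bar t\in\mathbb T^I$ is identified with the homomorphism $H\to\mathbb T$, $\bar g\mapsto\sum_i\bar g(i)\bar t(i)$, and $\widehat H$ (continuous homomorphisms $H\to\mathbb T$) is thereby a subgroup of $\mathbb T^I$. *)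

(* Defs.v *)
From HB Require Import structures.
From mathcomp Require Import all_boot all_order all_algebra.
From mathcomp Require Import boolp classical_sets functions cardinality fsbigop reals.
Set Implicit Arguments. Unset Strict Implicit. Unset Printing Implicit Defensive.
Import Order.TTheory GRing.Theory Num.Theory.
Local Open Scope classical_set_scope.
Local Open Scope ring_scope.

Definition ulam_measurable (I : Type) : Prop :=
  exists U : set (set I),
    U setT /\ ~ U set0 /\
    (forall A B, U A -> A `<=` B -> U B) /\
    (forall A, U A \/ U (~` A)) /\
    (forall F : nat -> set I, (forall n, U (F n)) -> U (\bigcap_n F n)) /\
    (forall i, ~ U [set i]).

(* elements of H = Z^(I): finitely supported functions I -> Z *)
Definition finsupp (I : choiceType) (g : I -> int) : Prop :=
  finite_set [set i | g i != 0].

Definition pairing (I : choiceType) (g x : I -> int) : int :=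
  \sum_(i \in [set i | g i != 0]) g i * x i.

(* the homomorphism H -> R whose reduction mod 1 is the element t of T^I
   (t given by real representatives) : g |-> sum_i g(i) t(i) *)
Definition charR (R : realType) (I : choiceType) (t : I -> R) (g : I -> int) : R :=
  \sum_(i \in [set i | g i != 0]) (g i)%:~R * t i.

(* a map f : H -> R, viewed modulo 1 as a map H -> T = R/Z, is continuous
   for the weak topology sigma(Z^(I), Z^I) on H (Z discrete) and the usual
   (quotient metric) topology on T.  Basic neighbourhoods of g in H are
   { h | <h,x_k> = <g,x_k>, k < n } for finitely many x_k in Z^I. *)
Definition weak_continuous_modZ (R : realType) (I : choiceType)
    (f : (I -> int) -> R) : Prop :=
  forall g, finsupp g -> forall e : R, 0 < e ->
    exists (n : nat) (xs : 'I_n -> I -> int),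
      forall h, finsupp h ->
        (forall k, pairing h (xs k) = pairing g (xs k)) ->
        exists m : int, `|f h - f g - m%:~R| < e.

Definition in_dual (R : realType) (I : choiceType) (t : I -> R) : Prop :=
  weak_continuous_modZ (charR t).

(* Main.v *)
Require Import Defs.
From HB Require Import structures.
From mathcomp Require Import all_boot all_order all_algebra.
From mathcomp Require Import boolp classical_sets functions cardinality fsbigop reals.
From mathcomp Require Import ring lra.
Import Order.TTheory GRing.Theory Num.Theory.
Set Implicit Arguments. Unset Strict Implicit. Unset Printing Implicit Defensive.
Local Open Scope ring_scope.

Lemma fs_seq (V : nmodType) (I : choiceType) (g : I -> int) (f : I -> V)
  (r : seq I) : uniq r -> (forall i, g i != 0 -> i \in r) ->
  (forall i, g i = 0 -> f i = 0) ->
  \sum_(i \in [set i | g i != 0]%classic) f i = \sum_(k <- r) f k.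
Proof.
move=> ur hsub f0; apply: fsbig_fwiden => //.
- move=> i [/= ir ngi]; apply: f0; apply/eqP; apply/negP => /negP; exact: ngi.
Qed.

Lemma intrMb (V : pzRingType) (a : int) (b : bool) :
  ((a *+ b)%:~R : V) = a%:~R *+ b.
Proof. by case: b; rewrite ?mulr1n ?mulr0n. Qed.

Definition comb (I : choiceType) (L : seq (int * I)) (k : I) : int :=
  \sum_(p <- L) p.1 *+ (k == p.2).

Lemma comb_sum (V : pzRingType) (I : choiceType) (r : seq I) (y : I -> V)
  (L : seq (int * I)) : uniq r -> all (fun p => p.2 \in r) L ->
  \sum_(k <- r) (comb L k)%:~R * y k = \sum_(p <- L) p.1%:~R * y p.2.
Proof.
move=> ur; elim: L => [|p L IH] /=.
  by rewrite big_nil big1 // => k _; rewrite /comb big_nil mul0r.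
move=> /andP[pr aL]; rewrite big_cons -IH //.
have <- : \sum_(k <- r) (p.1 *+ (k == p.2))%:~R * y k = p.1%:~R * y p.2.
  under eq_bigr do rewrite intrMb mulrnAl mulrb.
  by rewrite -big_mkcond -big_filter filter_pred1_uniq // big_seq1.
rewrite -big_split /=.
apply: eq_bigr => k _; rewrite /comb big_cons intrD mulrDl intrMb mulrnAl.
by [].
Qed.

Lemma comb_supp (I : choiceType) (L : seq (int * I)) k :
  comb L k != 0 -> k \in map snd L.
Proof.
apply: contraR => kL; rewrite /comb big1_seq // => p /andP[_ pL].
suff -> : (k == p.2) = false by [].
by apply/negbTE; apply: contra kL => /eqP ->; apply: map_f.
Qed.

Definition Fv (I : choiceType) (D : int) (i : I) (L : seq (int * I)) (y : I -> int) : int :=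
  D * y i + \sum_(p <- L) p.1 * y p.2.

Lemma Fv_step (I : choiceType) (D ws wi : int) (i j : I) (Li Ls : seq (int * I)) y :
  Fv (ws * D) i ([seq (ws * p.1, p.2) | p <- Li] ++
        (- (wi * D), j) :: [seq (- (wi * p.1), p.2) | p <- Ls]) y
  = ws * Fv D i Li y - wi * Fv D j Ls y.
Proof.
rewrite /Fv big_cat big_cons !big_map /= !mulrDr !mulr_sumr.
have -> : \sum_(j0 <- Li) ws * j0.1 * y j0.2 = \sum_(i0 <- Li) ws * (i0.1 * y i0.2).
  by apply: eq_bigr => p _; rewrite mulrA.
have -> : \sum_(j0 <- Ls) - (wi * j0.1) * y j0.2 = - \sum_(i0 <- Ls) wi * (i0.1 * y i0.2).
  by rewrite -sumrN; apply: eq_bigr => p _; rewrite mulNr mulrA.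
ring.
Qed.

Lemma claim (I : choiceType) (l : seq (I -> int)) :
  exists S : seq I, exists D : int, D != 0 /\
    forall i, exists L, all (fun p => p.2 \in S) L /\ all (fun y => Fv D i L y == 0) l.
Proof.
elim: l => [|x l [S [D [D0 IH]]]].
  by exists [::], 1; split => // i; exists [::].
case: (pselect (exists i L, [/\ all (fun p => p.2 \in S) L,
          all (fun y => Fv D i L y == 0) l & Fv D i L x != 0])).
- move=> [j [Ls [LsS Lsl ws0]]].
  set ws := Fv D j Ls x.
  exists (j :: S), (ws * D); split; first by rewrite mulf_neq0.
  move=> i; have [Li [LiS Lil]] := IH i.
  set wi := Fv D i Li x.
  exists ([seq (ws * p.1, p.2) | p <- Li] ++
        (- (wi * D), j) :: [seq (- (wi * p.1), p.2) | p <- Ls]); split.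
    rewrite all_cat /= !all_map mem_head /=; apply/andP; split.
      by apply: sub_all LiS => p /= pS; rewrite in_cons pS orbT.
    by apply: sub_all LsS => p /= pS; rewrite in_cons pS orbT.
  rewrite /= Fv_step -/ws -/wi mulrC subrr eqxx /=.
  apply/allP => y yl; rewrite Fv_step.
  by rewrite (eqP (allP Lil y yl)) (eqP (allP Lsl y yl)) !mulr0 subrr.
- move=> nex; exists S, D; split => // i.
  have [Li [LiS Lil]] := IH i; exists Li; split => //=.
  rewrite Lil andbT; apply/negPn/negP => nz; apply: nex.
  by exists i, Li; split.
Qed.

Lemma int_small (R : realType) (z : int) : `|(z%:~R : R)| < 1 -> z = 0.
Proof.
move=> h; apply/eqP; apply: contraLR h => z0.
rewrite -intr_norm -leNgt ler1z.
have : 0 < `|z| by rewrite normr_gt0.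
by case: (`|z|) => [[|n]|n].
Qed.

Lemma near_int_mult (R : realType) (c : R) :
  (forall j : nat, exists m : int, `|j%:R * c - m%:~R| < 1/4) ->
  exists m : int, c = m%:~R.
Proof.
move=> H; have [m1 h1] := H 1%N.
rewrite (_ : 1%:R * c = c) in h1; last by rewrite mul1r.
exists m1; set d := c - m1%:~R in h1 *.
have key : forall j : nat, `|j%:R * d| < 1/4.
  elim=> [|j IHj]; first by rewrite mul0r normr0; lra.
  have [m hm] := H j.+1.
  have e : j.+1%:R * c - m%:~R = j.+1%:R * d - (m - j.+1%:Z * m1)%:~R.
    by rewrite /d intrB intrM; ring.
  rewrite e in hm.
  have z0 : m - j.+1%:Z * m1 = 0.
    apply: (@int_small R).
    have t1 : `|j.+1%:R * d| <= `|j%:R * d| + `|d|.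
      by rewrite -[j.+1]addn1 natrD mulrDl mul1r ler_normD.
    set z := (m - j.+1%:Z * m1)%:~R : R in hm *.
    have t2 := ler_normB (j.+1%:R * d) (j.+1%:R * d - z).
    have ez : j.+1%:R * d - (j.+1%:R * d - z) = z by ring.
    rewrite ez in t2.
    lra.
  by rewrite z0 subr0 in hm.
apply/eqP; rewrite -subr_eq0 -/d; apply/eqP.
apply/eqP; apply: contraT => dn0.
have dp : 0 < `|d| by rewrite normr_gt0.
set j := (Num.trunc (`|d|^-1)).+1.
have hj : `|d|^-1 < j%:R by apply: truncnS_gt.
have := key j; rewrite normrM normr_nat.
have : 1 < j%:R * `|d|.
  by rewrite -ltr_pdivrMr // div1r.
lra.
Qed.

Lemma pairing_seq (I : choiceType) (g x : I -> int) (r : seq I) :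
  uniq r -> (forall i, g i != 0 -> i \in r) ->
  pairing g x = \sum_(k <- r) g k * x k.
Proof. by move=> ur hr; apply: fs_seq => // i ->; rewrite mul0r. Qed.

Lemma charR_seq (R : realType) (I : choiceType) (t : I -> R) (g : I -> int) (r : seq I) :
  uniq r -> (forall i, g i != 0 -> i \in r) ->
  charR t g = \sum_(k <- r) (g k)%:~R * t k.
Proof. by move=> ur hr; apply: fs_seq => // i ->; rewrite mul0r. Qed.

Lemma finsupp_seq (I : choiceType) (g : I -> int) (r : seq I) :
  (forall i, g i != 0 -> i \in r) -> finsupp g.
Proof.
move=> hr; apply: (sub_finite_set _ (finite_seq r)) => i /= gi; exact: hr.
Qed.

Lemma finsupp_ex (I : choiceType) (g : I -> int) :
  finsupp g -> exists r : seq I, uniq r /\ (forall i, g i != 0 -> i \in r).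
Proof.
move=> fg; exists (finmap.enum_fset (fset_set [set i | g i != 0]%classic)).
split; first exact: finmap.fset_uniq.
by move=> i gi; rewrite in_fset_set //; apply: mem_set.
Qed.

Lemma vanish (R : realType) (I : choiceType) (t : I -> R) :
  in_dual t -> exists n (xs : 'I_n -> I -> int), forall h, finsupp h ->
    (forall k, pairing h (xs k) = 0) -> exists m : int, charR t h = m%:~R.
Proof.
move=> H.
have f0 : finsupp (fun _ : I => 0 : int).
  by apply: (@finsupp_seq _ _ [::]) => i; rewrite eqxx.
have [n [xs Hx]] := H _ f0 (1/4) ltac:(lra).
exists n, xs => h fh hk; apply: near_int_mult => j.
have [r [ur hr]] := finsupp_ex fh.
have hr' : forall i, (j%:Z * h i) != 0 -> i \in r.
  by move=> i; rewrite mulf_eq0 negb_or => /andP[_ /hr].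
have [|m hm] := Hx (fun i => j%:Z * h i) (finsupp_seq hr').
  move=> k; rewrite (pairing_seq _ ur hr') (@pairing_seq _ _ _ [::]) //.
  rewrite big_nil; transitivity (j%:Z * pairing h (xs k)); last by rewrite hk mulr0.
  rewrite (pairing_seq _ ur hr) mulr_sumr.
  by apply: eq_bigr => i _; rewrite mulrA.
exists m; move: hm.
rewrite (charR_seq _ ur hr') (@charR_seq _ _ _ _ [::]) // big_nil subr0.
rewrite (charR_seq _ ur hr) mulr_sumr.
suff -> : \sum_(k <- r) (j%:Z * h k)%:~R * t k = \sum_(i <- r) j%:R * ((h i)%:~R * t i) by [].
by apply: eq_bigr => i _; rewrite intrM mulrA.
Qed.

Lemma structure (R : realType) (I : choiceType) (t : I -> R) :
  in_dual t -> exists S : seq I, exists D : int, D != 0 /\ forall i,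
    exists L : seq (int * I), all (fun p => p.2 \in S) L /\
    exists m : int, D%:~R * t i + \sum_(p <- L) p.1%:~R * t p.2 = m%:~R.
Proof.
move=> /vanish [n [xs Hx]].
have [S [D [D0 HS]]] := claim [seq xs k | k <- enum 'I_n].
exists S, D; split => // i.
have [L [LS Ll]] := HS i; exists L; split => //.
pose h := comb ((D, i) :: L).
pose r := undup (i :: map snd L).
have ur : uniq r := undup_uniq _.
have ar : all (fun p => p.2 \in r) ((D, i) :: L).
  apply/allP => p; rewrite /r in_cons => /orP[/eqP -> | pL].
    by rewrite mem_undup mem_head.
  by rewrite mem_undup in_cons (map_f snd pL) orbT.
have hr : forall k, h k != 0 -> k \in r.
  by move=> k /comb_supp; rewrite mem_undup.
have [|m hm] := Hx h (finsupp_seq hr).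
  move=> k; rewrite (pairing_seq _ ur hr).
  under eq_bigr do rewrite -[h _]intz.
  rewrite comb_sum // big_cons /=.
  under eq_bigr do rewrite intz.
  rewrite intz; apply/eqP.
  exact: (allP Ll (xs k) (map_f _ (mem_enum _ k))).
exists m; rewrite -hm (charR_seq _ ur hr) comb_sum // big_cons.
by [].
Qed.

Lemma final_bound (R : realType) (I : choiceType) (t : I -> R) (p q : I -> int)
    (t0 : R) (mf : I -> int) (S : seq I) (D : int) :
  (forall i, q i != 0) ->
  (forall i, coprimez (p i) (q i)) ->
  (irrational t0 \/ t0 = 1) ->
  (forall i, t i = ((p i)%:~R / (q i)%:~R) * t0 + (mf i)%:~R) ->
  D != 0 ->
  (forall i, exists L : seq (int * I), all (fun p => p.2 \in S) L /\
    exists m : int, D%:~R * t i + \sum_(p <- L) p.1%:~R * t p.2 = m%:~R) ->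
  exists B : nat, forall i, (`|q i| <= B)%N.
Proof.
move=> hq hcop ht0 hmf D0 HL.
pose Q0 := \prod_(s <- S) q s.
have Q00 : Q0 != 0.
  by rewrite prodf_seq_neq0; apply/allP => s _; rewrite hq.
have dv : forall s, s \in S -> (q s %| Q0)%Z.
  move=> s sS; rewrite /Q0 (big_rem s sS) /=.
  exact: dvdz_mulr (dvdzz _).
have key : forall s, s \in S -> (q s)%:~R * (Q0 %/ q s)%Z%:~R = Q0%:~R :> R.
  by move=> s sS; rewrite -intrM mulrC divzK // dv.
have Q0R : Q0%:~R != 0 :> R by rewrite intr_eq0.
exists (absz (D * Q0)) => i.
have [L [LS [m hm]]] := HL i.
pose C := \sum_(p0 <- L) p0.1 * p p0.2 * (Q0 %/ q p0.2)%Z.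
pose Mf := \sum_(p0 <- L) p0.1 * mf p0.2.
have hsum : \sum_(p0 <- L) p0.1%:~R * t p0.2 = C%:~R * t0 / Q0%:~R + Mf%:~R.
  rewrite /C /Mf !rmorph_sum mulr_suml mulr_suml -big_split /=.
  rewrite big_seq_cond [RHS]big_seq_cond; apply: eq_bigr => p0 /andP[p0L _].
  have sS := allP LS p0 p0L.
  have k := key _ sS.
  have qs0 : (q p0.2)%:~R != 0 :> R by rewrite intr_eq0.
  have d0 : (Q0 %/ q p0.2)%Z%:~R != 0 :> R.
    by apply: contra Q0R => /eqP d0; rewrite -k d0 mulr0.
  rewrite hmf !intrM -k; field.
  by rewrite d0 qs0.
rewrite hsum hmf in hm.
have qi0 : (q i)%:~R != 0 :> R by rewrite intr_eq0.
have E : (D * p i * Q0 + q i * C)%:~R * t0 = ((m - D * mf i - Mf) * q i * Q0)%:~R :> R.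
  apply/eqP; rewrite -subr_eq0; apply/eqP.
  rewrite !intrD !intrM !intrB !intrM.
  transitivity ((q i)%:~R * Q0%:~R *
    (D%:~R * ((p i)%:~R / (q i)%:~R * t0 + (mf i)%:~R) +
       (C%:~R * t0 / Q0%:~R + Mf%:~R) - m%:~R) : R).
    by field; rewrite qi0 Q0R.
  by rewrite hm subrr mulr0.
have [K hK] : exists K, D * Q0 * p i = q i * K.
  case: ht0 => [irr | t01].
    exists (- C).
    have N0 : D * p i * Q0 + q i * C = 0.
      apply/eqP; apply: contraT => N0; exfalso; apply: irr.
      exists (((m - D * mf i - Mf) * q i * Q0)%:~R / (D * p i * Q0 + q i * C)%:~R) => //.
      by rewrite fmorph_div !rmorph_int -E mulrAC mulfV ?mul1r // intr_eq0.
    by apply/eqP; rewrite mulrN -subr_eq0 opprK mulrAC; apply/eqP.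
  exists ((m - D * mf i - Mf) * Q0 - C).
  move: E; rewrite t01 mulr1 => /eqP; rewrite eqr_int => /eqP E.
  apply/eqP; rewrite -subr_eq0; apply/eqP.
  transitivity ((D * p i * Q0 + q i * C) - (m - D * mf i - Mf) * q i * Q0).
    by ring.
  by rewrite E subrr.
have : (q i %| D * Q0)%Z.
  have cqp : coprimez (q i) (p i) by rewrite coprimez_sym.
  rewrite -(Gauss_dvdzl _ cqp) hK.
  exact: dvdz_mulr (dvdzz _).
rewrite /dvdz => dq; apply: dvdn_leq => //.
by rewrite absz_gt0 mulf_neq0.
Qed.

Lemma charR_lin (R : realType) (I : choiceType) (t : I -> R) (a mf : I -> int) (c : R) g :
  finsupp g -> (forall i, t i = (a i)%:~R * c + (mf i)%:~R) ->
  charR t g = (pairing g a)%:~R * c + (pairing g mf)%:~R.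
Proof.
move=> fg ht; have [r [ur hr]] := finsupp_ex fg.
rewrite (charR_seq _ ur hr) (pairing_seq _ ur hr) (pairing_seq _ ur hr).
rewrite !rmorph_sum mulr_suml -big_split /=; apply: eq_bigr => i _.
by rewrite ht !intrM; ring.
Qed.

Lemma converse (R : realType) (I : choiceType) (t : I -> R) (p q : I -> int)
    (t0 : R) (mf : I -> int) :
  (forall i, q i != 0) ->
  (forall i, t i = ((p i)%:~R / (q i)%:~R) * t0 + (mf i)%:~R) ->
  (exists B : nat, forall i, (`|q i| <= B)%N) -> in_dual t.
Proof.
move=> hq hmf [B hB].
pose Lz : int := (B`!)%:Z.
have Lz0 : Lz%:~R != 0 :> R by rewrite intr_eq0 /Lz eqz_nat -lt0n fact_gt0.
pose a i := p i * (Lz %/ q i)%Z.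
pose c := t0 / Lz%:~R.
have ta : forall i, t i = (a i)%:~R * c + (mf i)%:~R.
  move=> i; rewrite hmf /a /c.
  have dq : (q i %| Lz)%Z.
    rewrite /dvdz /Lz /=; apply: dvdn_fact.
    by rewrite absz_gt0 hq hB.
  have k : (Lz %/ q i)%Z%:~R * (q i)%:~R = Lz%:~R :> R by rewrite -intrM divzK.
  have qi0 : (q i)%:~R != 0 :> R by rewrite intr_eq0.
  have d0 : (Lz %/ q i)%Z%:~R != 0 :> R.
    by apply: contra Lz0 => /eqP d0; rewrite -k d0 mul0r.
  rewrite -k intrM; field.
  by rewrite d0 qi0.
move=> g fg e e0.
exists 1%N, (fun _ => a) => h fh hpair.
exists (pairing h mf - pairing g mf).
rewrite (charR_lin fh ta) (charR_lin fg ta) (hpair ord0) intrB.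
have -> : (pairing g a)%:~R * c + (pairing h mf)%:~R - ((pairing g a)%:~R * c + (pairing g mf)%:~R) -
    ((pairing h mf)%:~R - (pairing g mf)%:~R) = 0 :> R by ring.
by rewrite normr0.
Qed.

Theorem lemma4p14 (R : realType) (I : choiceType) (t : I -> R) (p q : I -> int)
    (t0 : R) :
  ~ ulam_measurable I ->
  (forall i, q i != 0) ->
  (forall i, coprimez (p i) (q i)) ->
  (irrational t0 \/ t0 = 1) ->
  (forall i, exists m : int, t i = ((p i)%:~R / (q i)%:~R) * t0 + m%:~R) ->
  (in_dual t <-> exists B : nat, forall i, (`|q i| <= B)%N).
Proof.
move=> _ hq hcop ht0 ht.
have [mf hmf] := choice ht.
split.
  move=> /structure [S [D [D0 HL]]].
  exact: (final_bound hq hcop ht0 hmf D0 HL).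
exact: converse hq hmf.
Qed.
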